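(* Assume $Q^s(X^*,\xi)$ is finite for all $\xi\in\Xi^s$ and $\mathcal P^s\neq\emptyset$. Let $\mathcal Z=\{0,1\}^{\mathcal K\times\mathcal T}$ and for $z\in\mathcal Z$ let $\xi^s(z)\in\mathbb R^{\mathcal K\times\mathcal T}$ be given by $\xi^s(z)_{kt}=\xi^{Ls}_{kt}+(\xi^{Us}_{kt}-\xi^{Ls}_{kt})z_{kt}$. Then $w^s(\mathcal P^s;X^* )$ equals the optimal value of the linear program $$\max\sum_{z\in\mathcal Z}P_zQ^s(X^*,\xi^s(z))\quad\text{s.t.}\quad\sum_{z\in\mathcal Z}P_z=1,\ P_z\ge0\ \forall z,\ \ \gamma^{Ls}_{kt}\le\sum_{z\in\mathcal Z}P_z\,\xi^s(z)_{kt}\le\gamma^{Us}_{kt}\ \forall k\in\mathcal K,t\in\mathcal T.$$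
   Context: Fix finite index sets $\mathcal K,\mathcal T$, a cluster index $s$, and a fixed first-stage decision $X^*$. For a demand vector $\xi=(\xi_{kt})_{k\in\mathcal K,t\in\mathcal T}$, the recourse value is $Q^s(X^*,\xi)=\min\{C_Y^\top Y:\ B_YY\ge d-B^s_XX^*-B_\xi\xi,\ Y\ge 0\}$ (value $+\infty$ if infeasible), where $C_Y,B_Y,B_\xi,B^s_X,d$ are fixed data not depending on $\xi$. Given $\xi^{Ls}\le\xi^{Us}$ and $\gamma^{Ls}\le\gamma^{Us}$ in $\mathbb R^{\mathcal K\times\mathcal T}$, $\Xi^s=\{\xi:\xi^{Ls}_{kt}\le\xi_{kt}\le\xi^{Us}_{kt}\ \forall k,t\}$ and $\mathcal P^s$ is the set of probability distributions $\mathbb P$ supported on $\Xi^s$ with $\gamma^{Ls}_{kt}\le\mathbb E_{\mathbb P}[\xi_{kt}]\le\gamma^{Us}_{kt}$ for all $k,t$. The worst-case expected recourse value is $w^s(\mathcal P^s;X^* )=\sup_{\mathbb P\in\mathcal P^s}\mathbb E_{\mathbb P}[Q^s(X^*,\xi)]$. *)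

(* Defs.v *)
From HB Require Import structures.
From mathcomp Require Import all_boot all_order all_algebra.
From mathcomp Require Import all_classical all_reals all_analysis.
Set Implicit Arguments. Unset Strict Implicit. Unset Printing Implicit Defensive.
Import Order.TTheory GRing.Theory Num.Theory.
Local Open Scope classical_set_scope.
Local Open Scope ring_scope.

Section DRO.
Variables (R : realType) (K T : finType).

Definition demand := K -> T -> R.
HB.instance Definition _ := gen_eqMixin demand.
HB.instance Definition _ := gen_choiceMixin demand.
HB.instance Definition _ := isPointed.Build demand (fun _ _ => 0).

Definition coord_sets : set (set demand) :=
  fun S => exists k t (A : set R), measurable A /\ S = [set xi | A (xi k t)].

Definition demandSpace : measurableType (sigma_display coord_sets) :=
  g_sigma_algebraType (coord_sets : set (set (demand : pointedType))).

(* B_xi xi, where the column of B_xi indexed by (k,t) is Bxi k t *)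
Definition apply_Bxi (p : nat) (Bxi : K -> T -> 'cV[R]_p) (xi : demand) : 'cV[R]_p :=
  \sum_(k : K) \sum_(t : T) xi k t *: Bxi k t.

Definition recourse_feasible (p m q : nat) (BY : 'M[R]_(p, m))
  (Bxi : K -> T -> 'cV[R]_p) (BX : 'M[R]_(p, q)) (d : 'cV[R]_p) (X : 'cV[R]_q)
  (xi : demand) (Y : 'cV[R]_m) : Prop :=
  (forall i, (d - BX *m X - apply_Bxi Bxi xi) i 0 <= (BY *m Y) i 0) /\
  (forall j, 0 <= Y j 0).

(* Q^s(X, xi) = min { C_Y^T Y : B_Y Y >= d - B_X X - B_xi xi, Y >= 0 },
   +oo if infeasible (infimum of the empty set) *)
Definition recourse (p m q : nat) (CY : 'cV[R]_m) (BY : 'M[R]_(p, m))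
  (Bxi : K -> T -> 'cV[R]_p) (BX : 'M[R]_(p, q)) (d : 'cV[R]_p) (X : 'cV[R]_q)
  (xi : demand) : \bar R :=
  ereal_inf [set ((CY^T *m Y) 0 0)%:E | Y in recourse_feasible BY Bxi BX d X xi].

Definition box (xiL xiU : demand) : set demand :=
  [set xi | forall k t, xiL k t <= xi k t <= xiU k t].

Definition ambiguity_set (xiL xiU gammaL gammaU : demand)
  : set (probability demandSpace R) :=
  [set P | P (box xiL xiU : set demandSpace) = 1%E /\
     forall k t, ((gammaL k t)%:E <= \int[P]_x (x k t)%:E
                 <= (gammaU k t)%:E)%E].

Definition worst_case (Qf : demand -> \bar R) (Pset : set (probability demandSpace R))
  : \bar R :=
  ereal_sup [set (\int[P]_x Qf x)%E | P in Pset].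

Definition vertex (xiL xiU : demand) (z : {ffun K * T -> bool}) : demand :=
  fun k t => xiL k t + (xiU k t - xiL k t) * (z (k, t))%:R.

Definition vertex_lp_feasible (xiL xiU gammaL gammaU : demand)
  (Pz : {ffun {ffun K * T -> bool} -> R}) : Prop :=
  \sum_z Pz z = 1 /\ (forall z, 0 <= Pz z) /\
  forall k t, gammaL k t <= \sum_z Pz z * vertex xiL xiU z k t <= gammaU k t.

Definition vertex_lp_value (Qf : demand -> \bar R) (xiL xiU gammaL gammaU : demand)
  : \bar R :=
  ereal_sup [set (\sum_z (Pz z)%:E * Qf (vertex xiL xiU z))%E
            | Pz in vertex_lp_feasible xiL xiU gammaL gammaU].

End DRO.

(* Main.v *)
Require Import Defs.
From HB Require Import structures.
From mathcomp Require Import all_boot all_order all_algebra.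
From mathcomp Require Import all_classical all_reals all_analysis.
From mathcomp Require Import measurable_realfun.
From mathcomp Require Import lra.
Import Order.TTheory GRing.Theory Num.Theory.
Local Open Scope classical_set_scope.
Local Open Scope ring_scope.
Section generic.
Local Open Scope ereal_scope.
Context d (T : measurableType d) (R : realType) (mu : {measure set T -> \bar R}).

Lemma nn_mono (f g : T -> \bar R) : (forall x, 0 <= f x) -> (forall x, f x <= g x) ->
  \int[mu]_x f x <= \int[mu]_x g x.
Proof.
move=> f0 fg; have g0 x : 0 <= g x by apply: le_trans (f0 x) (fg x).
rewrite !ge0_integralTE//; apply: ereal_sup_le => _ [h hf <-]; exists h => //.
by move=> x; apply: le_trans (hf x) (fg x).
Qed.

Lemma int_le_ae (B : set T) (f g : T -> \bar R) : measurable B -> mu (~` B) = 0 ->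
  measurable_fun setT g -> (forall x, B x -> f x <= g x) ->
  \int[mu]_x f x <= \int[mu]_x g x.
Proof.
move=> mB mB0 mg fg.
have mBc : measurable (~` B) by exact: measurableC.
rewrite (integralE _ _ f) (integralE _ _ g); apply: leeB.
- apply: (@le_trans _ _ (\int[mu]_x (g^\+ x + (\1_(~` B) x)%:E * +oo))).
    apply: nn_mono => [x|x]; first exact: funepos_ge0.
    have [Bx|nBx] := pselect (B x).
      rewrite indicE memNset ?mul0e ?adde0; last by [].
      apply: (@funepos_le _ _ B); last exact: mem_set.
      by move=> y /set_mem; exact: fg.
    rewrite indicE mem_set// mul1e; case: (g^\+ x) (funepos_ge0 g x) => [r|_|//].
      by rewrite lee_fin => r0; rewrite addey ?leey.
    by rewrite leey.
  rewrite (@ae_eq_integral _ _ _ mu setT (g^\+)) ?lexx//.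
  + apply: emeasurable_funD; first exact: measurable_funepos.
    apply: emeasurable_funM => //; apply/measurable_EFinP.
    exact: measurable_indic.
  + exact: measurable_funepos.
  + exists (~` B); split => // x /= hx; apply: contrapT => /contrapT Bx.
    by apply: hx => _; rewrite indicE memNset ?mul0e ?adde0.
- apply: (@le_trans _ _ (\int[mu]_x (g^\- x * (\1_B x)%:E))).
    rewrite (@ae_eq_integral _ _ _ mu setT (fun x => g^\- x * (\1_B x)%:E)) ?lexx//.
    + exact: measurable_funeneg.
    + apply: emeasurable_funM; first exact: measurable_funeneg.
      by apply/measurable_EFinP; exact: measurable_indic.
    + exists (~` B); split => // x /= hx; apply: contrapT => /contrapT Bx.
      by apply: hx => _; rewrite indicE mem_set ?mule1.
  apply: nn_mono => [x|x].
    by rewrite indicE; case: (x \in B); rewrite ?mule1 ?mule0 ?funeneg_ge0.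
  rewrite indicE; have [Bx|nBx] := pselect (B x).
    rewrite mem_set// mule1.
    apply: (@funeneg_le _ _ B); last exact: mem_set.
    by move=> y /set_mem; exact: fg.
  by rewrite memNset// mule0 funeneg_ge0.
Qed.

Lemma int_ge_ae (B : set T) (f g : T -> \bar R) : measurable B -> mu (~` B) = 0 ->
  measurable_fun setT g -> (forall x, B x -> g x <= f x) ->
  \int[mu]_x g x <= \int[mu]_x f x.
Proof.
move=> mB mB0 mg fg.
have mBc : measurable (~` B) by exact: measurableC.
rewrite (integralE _ _ f) (integralE _ _ g); apply: leeB.
- apply: (@le_trans _ _ (\int[mu]_x (g^\+ x * (\1_B x)%:E))).
    rewrite (@ae_eq_integral _ _ _ mu setT (fun x => g^\+ x * (\1_B x)%:E)) ?lexx//.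
    + exact: measurable_funepos.
    + apply: emeasurable_funM; first exact: measurable_funepos.
      by apply/measurable_EFinP; exact: measurable_indic.
    + exists (~` B); split => // x /= hx; apply: contrapT => /contrapT Bx.
      by apply: hx => _; rewrite indicE mem_set ?mule1.
  apply: nn_mono => [x|x].
    by rewrite indicE; case: (x \in B); rewrite ?mule1 ?mule0 ?funepos_ge0.
  rewrite indicE; have [Bx|nBx] := pselect (B x).
    rewrite mem_set// mule1.
    apply: (@funepos_le _ _ B); last exact: mem_set.
    by move=> y /set_mem; exact: fg.
  by rewrite memNset// mule0 funepos_ge0.
- apply: (@le_trans _ _ (\int[mu]_x (g^\- x + (\1_(~` B) x)%:E * +oo))).
    apply: nn_mono => [x|x]; first exact: funeneg_ge0.
    have [Bx|nBx] := pselect (B x).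
      rewrite indicE memNset ?mul0e ?adde0; last by [].
      apply: (@funeneg_le _ _ B); last exact: mem_set.
      by move=> y /set_mem; exact: fg.
    rewrite indicE mem_set// mul1e; case: (g^\- x) (funeneg_ge0 g x) => [r|_|//].
      by rewrite lee_fin => r0; rewrite addey ?leey.
    by rewrite leey.
  rewrite (@ae_eq_integral _ _ _ mu setT (g^\-)) ?lexx//.
  + apply: emeasurable_funD; first exact: measurable_funeneg.
    apply: emeasurable_funM => //; apply/measurable_EFinP.
    exact: measurable_indic.
  + exact: measurable_funeneg.
  + exists (~` B); split => // x /= hx; apply: contrapT => /contrapT Bx.
    by apply: hx => _; rewrite indicE memNset ?mul0e ?adde0.
Qed.

Lemma int_eq_ae (B : set T) (f g : T -> \bar R) : measurable B -> mu (~` B) = 0 ->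
  measurable_fun setT g -> (forall x, B x -> f x = g x) ->
  \int[mu]_x f x = \int[mu]_x g x.
Proof.
move=> mB mB0 mg fg; apply/eqP; rewrite eq_le; apply/andP; split.
  by apply: (@int_le_ae B f g mB) => // x /fg ->.
by apply: (@int_ge_ae B f g mB) => // x /fg ->.
Qed.
End generic.
Section lam.
Variables (R : realType) (I : finType) (a : I -> R).
Definition lam (z : {ffun I -> bool}) : R := \prod_i (if z i then a i else 1 - a i).

Lemma sum_lam : \sum_z lam z = 1.
Proof.
rewrite /lam -(bigA_distr_bigA (fun i (b : bool) => if b then a i else 1 - a i)).
by apply: big1 => i _; rewrite big_bool /= addrC subrK.
Qed.

Lemma sum_lam_coord j : \sum_z lam z * (z j)%:R = a j.
Proof.
pose F i (b : bool) := (if b then a i else 1 - a i) * (if i == j then b%:R else 1).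
transitivity (\sum_(z : {ffun I -> bool}) \prod_i F i (z i)).
  apply: eq_bigr => z _; rewrite /lam (bigD1 j)//= [in RHS](bigD1 j)//= /F eqxx.
  under [in RHS]eq_bigr => i /negbTE -> do rewrite mulr1.
  by rewrite mulrAC.
rewrite -(bigA_distr_bigA F) (bigD1 j)//= [X in _ * X]big1 ?mulr1.
  by rewrite big_bool /F /= eqxx mulr1 mulr0 addr0.
by move=> i /negbTE ij; rewrite big_bool /F /= ij !mulr1 addrC subrK.
Qed.

Lemma lam_ge0 z : (forall i, 0 <= a i <= 1) -> 0 <= lam z.
Proof.
move=> a01; apply: prodr_ge0 => i _; case: (z i); have /andP[] := a01 i => //.
by move=> _ ?; rewrite subr_ge0.
Qed.

Lemma lam_le1 z : (forall i, 0 <= a i <= 1) -> lam z <= 1.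
Proof.
move=> a01; apply: prodr_ile1 => i _; have /andP[a0 a1] := a01 i.
by case: (z i); apply/andP; split; lra.
Qed.
End lam.
Section conv.
Variables (R : realType) (K T : finType) (p m q : nat)
  (CY : 'cV[R]_m) (BY : 'M[R]_(p, m)) (Bxi : K -> T -> 'cV[R]_p)
  (BX : 'M[R]_(p, q)) (d : 'cV[R]_p) (X : 'cV[R]_q).
Variable (J : finType).

Lemma mul_comb (a : nat) (M : 'M[R]_(a, m)) (w : J -> R) (Yf : J -> 'cV[R]_m) i :
  (M *m (\sum_j w j *: Yf j)) i 0 = \sum_j w j * (M *m Yf j) i 0.
Proof.
rewrite mulmx_sumr summxE; apply: eq_bigr => j _.
by rewrite -scalemxAr mxE.
Qed.

Lemma apply_Bxi_comb (w : J -> R) (v : J -> demand R K T) (xi : demand R K T) :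
  (forall k t, xi k t = \sum_j w j * v j k t) ->
  apply_Bxi Bxi xi = \sum_j w j *: apply_Bxi Bxi (v j).
Proof.
move=> hxi; rewrite /apply_Bxi.
transitivity (\sum_k \sum_t \sum_j (w j * v j k t) *: Bxi k t).
  by apply: eq_bigr => k _; apply: eq_bigr => t _; rewrite hxi scaler_suml.
under eq_bigr => k _ do rewrite exchange_big.
rewrite exchange_big; apply: eq_bigr => j _; rewrite scaler_sumr.
apply: eq_bigr => k _; rewrite scaler_sumr; apply: eq_bigr => t _.
by rewrite scalerA.
Qed.

Local Notation Q := (recourse CY BY Bxi BX d X).

Lemma recourse_comb (w : J -> R) (v : J -> demand R K T) (xi : demand R K T) :
  (forall j, 0 <= w j) -> \sum_j w j = 1 ->
  (forall k t, xi k t = \sum_j w j * v j k t) ->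
  (forall j, Q (v j) \is a fin_num) ->
  (Q xi <= (\sum_j w j * fine (Q (v j)))%:E)%E.
Proof.
move=> w0 w1 hxi Qfin.
apply/lee_addgt0Pr => e e0.
have hY : forall j, exists Y, recourse_feasible BY Bxi BX d X (v j) Y /\
    (CY^T *m Y) 0 0 < fine (Q (v j)) + e.
  move=> j; have [x [Y fY <-]] := lb_ereal_inf_adherent e0 (Qfin j).
  rewrite -/(recourse CY BY Bxi BX d X (v j)) -(fineK (Qfin j)) -EFinD lte_fin => hlt.
  by exists Y.
have [Yf HY] := boolp.choice hY.
pose Y := \sum_j w j *: Yf j.
have fY : recourse_feasible BY Bxi BX d X xi Y.
  split.
  - move=> i; rewrite mul_comb.
    have -> : (d - BX *m X - apply_Bxi Bxi xi) i 0 =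
      \sum_j w j * (d - BX *m X - apply_Bxi Bxi (v j)) i 0.
      rewrite (@apply_Bxi_comb w v xi hxi) !mxE summxE.
      under [RHS]eq_bigr => j _ do rewrite !mxE mulrBr mulrDr.
      rewrite sumrB big_split /= -!mulr_suml w1 !mul1r; congr (_ - _).
      by apply: eq_bigr => j _; rewrite mxE.
    apply: ler_sum => j _; apply: ler_wpM2l => //.
    by have [[+ _] _] := HY j; apply.
  - move=> i; rewrite summxE; apply: sumr_ge0 => j _; rewrite mxE.
    by apply: mulr_ge0 => //; have [[_ +] _] := HY j; apply.
apply: (@le_trans _ _ ((CY^T *m Y) 0 0)%:E).
  by apply: ereal_inf_lbound; exists Y.
rewrite -EFinD lee_fin mul_comb.
have -> : \sum_j w j * fine (Q (v j)) + e = \sum_j w j * (fine (Q (v j)) + e).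
  by rewrite -[e in LHS]mul1r -w1 mulr_suml -big_split; apply: eq_bigr => j _; rewrite mulrDr.
apply: ler_sum => j _; apply: ler_wpM2l => //.
by have [_ /ltW] := HY j.
Qed.
End conv.
Arguments lam {R I} a z.
Arguments sum_lam {R I} a.
Arguments sum_lam_coord {R I} a j.
Arguments lam_ge0 {R I} a z.
Arguments lam_le1 {R I} a z.

Section main.
Variables (R : realType) (K T : finType) (xiL xiU : demand R K T).
Local Notation Z := {ffun K * T -> bool}.
Local Notation DS := (demandSpace R K T).
Hypothesis LU : forall k t, xiL k t <= xiU k t.

Definition ca (xi : demand R K T) (i : K * T) : R :=
  Num.min (Num.max ((xi i.1 i.2 - xiL i.1 i.2) / (xiU i.1 i.2 - xiL i.1 i.2)) 0) 1.

Lemma ca01 xi i : 0 <= ca xi i <= 1.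
Proof.
rewrite /ca; set y := _ / _; apply/andP; split.
  by rewrite le_min ler01 le_max lexx orbT.
by rewrite ge_min lexx orbT.
Qed.

Lemma ca_id xi k t : box xiL xiU xi ->
  xiL k t + (xiU k t - xiL k t) * ca xi (k, t) = xi k t.
Proof.
move=> /(_ k t) /andP [h1 h2]; rewrite /ca /=.
have [e|ne] := eqVneq (xiU k t) (xiL k t).
  have -> : xi k t = xiL k t by apply/le_anti; rewrite h1 -e h2.
  by rewrite e subrr mul0r addr0.
have hp : 0 < xiU k t - xiL k t by rewrite subr_gt0 lt_neqAle eq_sym ne LU.
set y := _ / _.
have y0 : 0 <= y by rewrite /y divr_ge0// subr_ge0.
have y1 : y <= 1 by rewrite /y ler_pdivrMr// mul1r lerB.
have -> : Num.max y 0 = y by apply/max_idPl.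
have -> : Num.min y 1 = y by apply/min_idPl.
by rewrite /y mulrC divfK ?gt_eqF// addrC subrK.
Qed.

Lemma mcoord k t : measurable_fun setT (fun xi : DS => xi k t).
Proof. by move=> _ A mA; rewrite setTI; apply: sub_sigma_algebra; exists k, t, A. Qed.

Lemma mbox : measurable (box xiL xiU : set DS).
Proof.
have -> : (box xiL xiU : set DS) = \bigcap_(i in [set: K * T])
    (setT `&` (fun xi : DS => xi i.1 i.2) @^-1` `[xiL i.1 i.2, xiU i.1 i.2]).
  apply/seteqP; split => xi /=.
    by move=> hb i _; split => //; rewrite /= in_itv /=; exact: hb.
  by move=> hb k t; have [_] := hb (k, t) I; rewrite /= in_itv.
apply: fin_bigcap_measurable; first exact: finite_finset.
by move=> i _; apply: mcoord => //; exact: measurable_itv.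
Qed.

Lemma mca i : measurable_fun setT (fun xi : DS => ca xi i).
Proof.
apply: measurable_minr; last exact: measurable_cst.
apply: measurable_maxr; last exact: measurable_cst.
apply: measurable_funM; last exact: measurable_cst.
by apply: measurable_funB; [exact: mcoord|exact: measurable_cst].
Qed.

Definition lamx (z : Z) (xi : DS) : R := lam (ca xi) z.

Lemma mlamx z : measurable_fun setT (lamx z).
Proof.
rewrite /lamx /lam; apply: measurable_prod => i _.
case: (z i); first exact: mca.
by apply: measurable_funB; [exact: measurable_cst|exact: mca].
Qed.

Lemma lamx_comb (xi : DS) : box xiL xiU xi ->
  forall k t, xi k t = \sum_z lamx z xi * vertex xiL xiU z k t.
Proof.
move=> hb k t; rewrite /vertex; under eq_bigr => z _ do rewrite mulrDr mulrCA.
rewrite big_split /= -mulr_suml -mulr_sumr /lamx sum_lam mul1r.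
by rewrite (sum_lam_coord (ca xi) (k, t)) ca_id.
Qed.

Lemma vertex_box z : box xiL xiU (vertex xiL xiU z).
Proof.
move=> k t; rewrite /vertex; have := LU k t.
by case: (z (k, t)) => /= h; apply/andP; split; rewrite ?mulr1 ?mulr0 ?addr0 ?lexx//; lra.
Qed.

Lemma int_bnd (P : probability DS R) (f : DS -> R) (M : R) : measurable_fun setT f ->
  (forall x, `|f x| <= M) -> P.-integrable setT (EFin \o f).
Proof.
move=> mf fM; apply/integrableP; split; first exact/measurable_EFinP.
apply: (@le_lt_trans _ _ (\int[P]_x (cst M%:E) x)%E).
  apply: nn_mono => x /=; first by rewrite lee_fin.
  by rewrite lee_fin.
rewrite integral_cst//.
have h1 : P setT = 1%E := probability_setT P.
first [by rewrite h1 mule1 ltry | by rewrite /= h1 mule1 ltry | (unfold setT in h1 |- *; by rewrite h1 mule1 ltry)].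
Qed.

Lemma int_sumEFin (P : probability DS R) (F : Z -> DS -> R) :
  (forall z, P.-integrable setT (EFin \o F z)) ->
  (\int[P]_x (\sum_z F z x)%:E = \sum_z \int[P]_x (F z x)%:E)%E.
Proof.
move=> hF; under eq_integral do rewrite -sumEFin.
by rewrite integral_sum.
Qed.

Lemma lamx_bnd z x : `|lamx z x| <= 1.
Proof.
by rewrite ger0_norm ?lam_le1 ?lam_ge0// => i; apply: ca01.
Qed.

Lemma int_lamx (P : probability DS R) z c : P.-integrable setT (EFin \o (fun x => lamx z x * c)).
Proof.
apply: (@int_bnd P _ `|c|).
  by apply: measurable_funM; [exact: mlamx|exact: measurable_cst].
move=> x; rewrite normrM; apply: ler_piMl => //; exact: lamx_bnd.
Qed.

Variables (p m q : nat)
  (CY : 'cV[R]_m) (BY : 'M[R]_(p, m)) (Bxi : K -> T -> 'cV[R]_p)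
  (BX : 'M[R]_(p, q)) (d : 'cV[R]_p) (X : 'cV[R]_q) (gammaL gammaU : demand R K T).
Local Notation Q := (recourse CY BY Bxi BX d X).
Hypothesis Qfin : forall xi, box xiL xiU xi -> Q xi \is a fin_num.

Lemma wc_le (P : probability DS R) : ambiguity_set xiL xiU gammaL gammaU P ->
  (\int[P]_x Q x <= vertex_lp_value Q xiL xiU gammaL gammaU)%E.
Proof.
move=> [Pbox Pint].
have mB := mbox.
have PC : P (~` (box xiL xiU : set DS)) = 0%E.
  by rewrite probability_setC// Pbox subee.
pose qz z := fine (Q (vertex xiL xiU z)).
have QE z : Q (vertex xiL xiU z) = (qz z)%:E.
  by rewrite /qz fineK//; apply: Qfin; exact: vertex_box.
have intl z : P.-integrable setT (EFin \o lamx z).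
  apply: (@int_bnd P (lamx z) 1); first exact: mlamx.
  by move=> x; exact: lamx_bnd.
pose Pz := [ffun z => fine (\int[P]_x (lamx z x)%:E)].
have PzE z : (Pz z)%:E = (\int[P]_x (lamx z x)%:E)%E.
  by rewrite ffunE fineK//; apply: integrable_fin_num => //; exact: intl.
have step1 : (\int[P]_x Q x <= \int[P]_x (\sum_z lamx z x * qz z)%:E)%E.
  apply: (@int_le_ae _ _ _ P (box xiL xiU)) => //.
    apply/measurable_EFinP; apply: measurable_sum => z.
    by apply: measurable_funM; [exact: mlamx|exact: measurable_cst].
  move=> x hx; apply: recourse_comb.
  - by move=> z; apply: lam_ge0 => i; exact: ca01.
  - exact: sum_lam.
  - exact: lamx_comb.
  - by move=> z; apply: Qfin; exact: vertex_box.
have step2 : (\int[P]_x (\sum_z lamx z x * qz z)%:E = (\sum_z Pz z * qz z)%:E)%E.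
  rewrite int_sumEFin; last by move=> z; exact: int_lamx.
  rewrite -sumEFin; apply: eq_bigr => z _.
  by rewrite EFinM PzE -integralZr//; exact: intl.
apply: (le_trans step1); rewrite step2.
apply: ereal_sup_ubound; exists Pz.
  split; [|split].
  - apply: EFin_inj; rewrite -sumEFin.
    under eq_bigr do rewrite PzE.
    rewrite -int_sumEFin//.
    under eq_integral do rewrite sum_lam.
    rewrite integral_cst//.
    have h1 : P setT = 1%E := probability_setT P.
    first [by rewrite h1 mul1e | by rewrite /= h1 mul1e | (unfold setT in h1 |- *; by rewrite h1 mul1e)].
  - move=> z; rewrite ffunE fine_ge0// integral_ge0// => x _.
    by rewrite lee_fin lam_ge0// => i; exact: ca01.
  - move=> k t.
    have E : ((\sum_z Pz z * vertex xiL xiU z k t)%:E = \int[P]_x (x k t)%:E)%E.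
      rewrite (@int_eq_ae _ _ _ P (box xiL xiU) _
        (fun x => (\sum_z lamx z x * vertex xiL xiU z k t)%:E)) //; last first.
      + by move=> x hx /=; rewrite -lamx_comb.
      + apply/measurable_EFinP; apply: measurable_sum => z.
        by apply: measurable_funM; [exact: mlamx|exact: measurable_cst].
      rewrite int_sumEFin; last by move=> z; exact: int_lamx.
      rewrite -sumEFin; apply: eq_bigr => z _.
      by rewrite EFinM PzE -integralZr//; exact: intl.
    by have /andP[h1 h2] := Pint k t; rewrite -!lee_fin E h1 h2.
rewrite -sumEFin; apply: eq_bigr => z _.
by rewrite QE EFinM.
Qed.
End main.

Lemma fin_pos (R : realType) (x : \bar R) : x \is a fin_num -> (maxe x 0 \is a fin_num)%E.
Proof. by move=> fx; rewrite /Order.max; case: ifP. Qed.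

Section disc.
Variables (R : realType) (K T : finType) (xiL xiU : demand R K T).
Local Notation Z := {ffun K * T -> bool}.
Local Notation DS := (demandSpace R K T).
Variable Pz : {ffun Z -> R}.

Definition z0 : Z := [ffun => false].
Definition cfeas : bool := (\sum_z Pz z == 1) && [forall z, 0 <= Pz z].
Definition wt (z : Z) : R := if cfeas then Pz z else (z == z0)%:R.

Lemma wt_ge0 z : 0 <= wt z.
Proof. by rewrite /wt /cfeas; case: andP => [[_ /forallP] //|_]; rewrite ler0n. Qed.

Lemma sum_wt : \sum_z wt z = 1.
Proof.
rewrite /wt /cfeas; case: andP => [[/eqP //]|_].
by rewrite (bigD1 z0)//= eqxx big1 ?addr0// => z /negbTE ->.
Qed.

Definition npt (n : nat) : Z := nth z0 (index_enum Z) n.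
Definition NZ := size (index_enum Z).

Lemma sum_npt (V : Type) (idx : V) (op : Monoid.law idx) (F : Z -> V) :
  \big[op/idx]_(n < NZ) F (npt n) = \big[op/idx]_z F z.
Proof. by rewrite [RHS](big_nth z0) big_mkord. Qed.

Definition mdisc (n : nat) : {measure set DS -> \bar R} :=
  mscale (NngNum (wt_ge0 (npt n))) (@dirac _ DS (vertex xiL xiU (npt n)) R).

Definition disc := msum mdisc NZ.

Let disc0 : disc set0 = 0%E. Proof. exact: measure0. Qed.
Let disc_ge0 A : (0 <= disc A)%E. Proof. exact: measure_ge0. Qed.
Let disc_sa : semi_sigma_additive disc. Proof. exact: measure_semi_sigma_additive. Qed.
HB.instance Definition _ := isMeasure.Build _ _ _ disc disc0 disc_ge0 disc_sa.

Lemma discE A : disc A = (\sum_z (wt z)%:E * \d_(vertex xiL xiU z : DS) A)%E.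
Proof. by rewrite /disc /msum -(@sum_npt _ _ _ (fun z => (wt z)%:E * \d_(vertex xiL xiU z : DS) A)%E). Qed.

Let disc_setT : disc setT = 1%E.
Proof.
rewrite discE; under eq_bigr do rewrite diracT mule1.
by rewrite sumEFin sum_wt.
Qed.
HB.instance Definition _ := Measure_isProbability.Build _ _ _ disc disc_setT.

Lemma disc_int_ge0 (f : DS -> \bar R) : measurable_fun setT f -> (forall x, 0 <= f x)%E ->
  (\int[disc]_x f x = \sum_z (wt z)%:E * f (vertex xiL xiU z))%E.
Proof.
move=> mf f0; rewrite ge0_integral_measure_sum//.
rewrite -(@sum_npt _ _ _ (fun z => (wt z)%:E * f (vertex xiL xiU z))%E).
apply: eq_bigr => n _; rewrite ge0_integral_mscale//= integral_dirac//.
by rewrite diracT mul1e.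
Qed.

Lemma disc_int (g : DS -> \bar R) : measurable_fun setT g ->
  (forall z, g (vertex xiL xiU z) \is a fin_num) ->
  (\int[disc]_x g x = \sum_z (wt z)%:E * g (vertex xiL xiU z))%E.
Proof.
move=> mg gfin; rewrite integralE.
rewrite disc_int_ge0//; last exact: measurable_funepos.
rewrite disc_int_ge0//; last exact: measurable_funeneg.
have fp z : ((wt z)%:E * g^\+ (vertex xiL xiU z))%E \is a fin_num.
  by rewrite fin_numM// funeposE fin_pos.
have fn z : ((wt z)%:E * g^\- (vertex xiL xiU z))%E \is a fin_num.
  by rewrite fin_numM// funenegE fin_pos// fin_numN.
rewrite -fin_num_sumeN// -big_split /=; apply: eq_bigr => z _.
rewrite [in RHS](funeposneg g) muleBr//.
by apply: fin_num_adde_defr; rewrite funeposE fin_pos.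
Qed.
End disc.

Section final.
Variables (R : realType) (K T : finType) (xiL xiU : demand R K T).
Local Notation Z := {ffun K * T -> bool}.
Local Notation DS := (demandSpace R K T).

Lemma mset1 (a : DS) : measurable [set a].
Proof.
have -> : [set a] = \bigcap_(i in [set: K * T])
    (setT `&` (fun xi : DS => xi i.1 i.2) @^-1` [set a i.1 i.2]).
  apply/seteqP; split => xi /=.
    by move=> -> i _.
  move=> h; apply/funext => k; apply/funext => t.
  by have [_ ->] := h (k, t) I.
apply: fin_bigcap_measurable; first exact: finite_finset.
by move=> i _; apply: mcoord => //; exact: measurable_set1.
Qed.

Definition VV : set DS := \bigcup_(z in [set: Z]) [set (vertex xiL xiU z : DS)].

Lemma mVV : measurable VV.
Proof. by apply: fin_bigcup_measurable; [exact: finite_finset|move=> z _; exact: mset1]. Qed.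

Lemma disc_VVC Pz : disc R K T xiL xiU Pz (~` VV) = 0%E.
Proof.
rewrite discE big1// => z _; rewrite diracE memNset ?mule0//.
by move=> /=; apply; exists z.
Qed.

Definition sv : seq (demand R K T) := undup [seq vertex xiL xiU z | z <- index_enum Z].

Lemma sum_ind (F : demand R K T -> R) (x : demand R K T) : x \in sv ->
  \sum_(a <- sv) F a * \1_[set (a : DS)] (x : DS) = F x.
Proof.
move=> xs; rewrite (big_rem x)//= indicE mem_set// mulr1 big_seq big1 ?addr0//.
move=> a ar; rewrite indicE memNset ?mulr0// => /= xa.
by move: ar; rewrite xa mem_rem_uniqF// undup_uniq.
Qed.

Variables (p m q : nat)
  (CY : 'cV[R]_m) (BY : 'M[R]_(p, m)) (Bxi : K -> T -> 'cV[R]_p)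
  (BX : 'M[R]_(p, q)) (d : 'cV[R]_p) (X : 'cV[R]_q) (gammaL gammaU : demand R K T).
Local Notation Q := (recourse CY BY Bxi BX d X).
Hypothesis LU : forall k t, xiL k t <= xiU k t.
Hypothesis Qfin : forall xi, box xiL xiU xi -> Q xi \is a fin_num.

Lemma lp_le Pz : vertex_lp_feasible xiL xiU gammaL gammaU Pz ->
  (\sum_z (Pz z)%:E * Q (vertex xiL xiU z) <=
   worst_case Q (ambiguity_set xiL xiU gammaL gammaU))%E.
Proof.
move=> [s1 [s0 sg]].
have wE z : wt R K T Pz z = Pz z.
  rewrite /wt /cfeas s1 eqxx /=.
  by have -> : [forall z, 0 <= Pz z] by apply/forallP.
pose P := disc R K T xiL xiU Pz.
have Pin : ambiguity_set xiL xiU gammaL gammaU P.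
  split.
    change (disc R K T xiL xiU Pz (box xiL xiU) = 1%E).
    rewrite discE; under eq_bigr => z _ do rewrite diracE (mem_set (@vertex_box R K T xiL xiU LU z)) mule1.
    by rewrite sumEFin; under eq_bigr do rewrite wE; rewrite s1.
  move=> k t; rewrite disc_int//; last first.
    by apply/measurable_EFinP; exact: mcoord.
  rewrite sumEFin; under eq_bigr do rewrite wE.
  by rewrite !lee_fin; exact: sg.
apply: (@le_trans _ _ (\int[P]_x Q x)%E); last first.
  by apply: ereal_sup_ubound; exists P.
pose g : DS -> R := fun x => \sum_(a <- sv) fine (Q a) * \1_[set (a : DS)] x.
have mg : measurable_fun setT g.
  apply: measurable_sum => a; apply: measurable_funM; first exact: measurable_cst.
  by apply: measurable_indic; exact: mset1.
have vin z : vertex xiL xiU z \in sv.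
  by rewrite mem_undup; apply/mapP; exists z => //; rewrite mem_index_enum.
have gv z : (g (vertex xiL xiU z))%:E = Q (vertex xiL xiU z).
  by rewrite /g sum_ind// fineK//; apply: Qfin; exact: vertex_box.
apply: (@le_trans _ _ (\int[P]_x (g x)%:E)%E); last first.
  apply: (@int_ge_ae _ _ _ P VV) => //.
  - exact: mVV.
  - exact: disc_VVC.
  - exact/measurable_EFinP.
  - by move=> x [z _ ->] /=; rewrite le_eqVlt; apply/orP; left; apply/eqP; exact: gv.
rewrite disc_int//; last exact/measurable_EFinP.
apply: lee_sum => z _; rewrite wE /= le_eqVlt; apply/orP; left; apply/eqP.
by congr (_ * _)%E; symmetry; exact: gv.
Qed.
End final.

Theorem corollary1 (R : realType) (K T : finType) (p m q : nat)
  (CY : 'cV[R]_m) (BY : 'M[R]_(p, m)) (Bxi : K -> T -> 'cV[R]_p)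
  (BX : 'M[R]_(p, q)) (d : 'cV[R]_p) (X : 'cV[R]_q)
  (xiL xiU gammaL gammaU : demand R K T) :
  (forall k t, xiL k t <= xiU k t) ->
  (forall k t, gammaL k t <= gammaU k t) ->
  (forall xi, box xiL xiU xi ->
     recourse CY BY Bxi BX d X xi \is a fin_num) ->
  ambiguity_set xiL xiU gammaL gammaU !=set0 ->
  worst_case (recourse CY BY Bxi BX d X) (ambiguity_set xiL xiU gammaL gammaU)
  = vertex_lp_value (recourse CY BY Bxi BX d X) xiL xiU gammaL gammaU.
Proof.
move=> LU _ Qfin _.
apply/eqP; rewrite eq_le; apply/andP; split.
- apply: ge_ereal_sup => _ [P hP <-].
  exact: (@wc_le R K T xiL xiU LU p m q CY BY Bxi BX d X gammaL gammaU Qfin P hP).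
- apply: ge_ereal_sup => _ [Pz hPz <-].
  exact: (@lp_le R K T xiL xiU p m q CY BY Bxi BX d X gammaL gammaU LU Qfin Pz hPz).
Qed.
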